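(* The following hold. 1. Let $C>1$, $k\in\mathbb{N}\setminus\{1\}$ and $p=p(n)\geq Cn^{-2/k}$. If $k'\leq k$ and $F_1:=K_{k'}$, then $\Phi_{F_1}\geq Cn$. 2. Let $C>1$, $k\in\mathbb{N}\setminus\{1\}$ and $p=p(n)\geq Cn^{-2/k}$. Let $3\leq k'\leq k$, let $F_2:=K_{k'}^-$ be the complete graph on $k'$ vertices with one edge removed, and let $w\in V(F_2)$ be one of the endpoints of the removed edge. Then $\Phi_{F_2}\geq Cn$ and $\Phi_{F_2,w}\geq\min\{Cn^{1-\frac{2}{k}},Cn^{\frac{2}{k}}\}\geq Cn^{\frac{1}{k}}$. 3. Let $F_3,F_4$ be graphs with vertex subsets $W_3\subseteq V(F_3)$, $W_4\subseteq V(F_4)$ (each spanning no edges), let $\Phi_3:=\Phi_{F_3,W_3}$ and $\Phi_4:=\Phi_{F_4,W_4}$, and suppose $\Phi_3,\Phi_4\geq1$. Let $F_5$ be the union of $F_3$ and $F_4$ meeting in exactly one vertex $x\in(V(F_3)\setminus W_3)\cap(V(F_4)\setminus W_4)$, and let $F_6$ be the disjoint union of $F_3$ and $F_4$. With $W_5:=W_3\sqcup W_4$, we have $\Phi_{F_5,W_5}\geq\min\{\Phi_3,\Phi_4,\Phi_3\Phi_4n^{-1}\}$ and $\Phi_{F_6,W_5}=\min\{\Phi_3,\Phi_4\}$.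
   Context: For a graph $H$ write $v_H,e_H$ for its numbers of vertices and edges. For a graph $F$, an integer $n$, a probability $p$ and a set $W\subseteq V(F)$ spanning no edges of $F$, define $\Phi_{F,W}=\Phi_{F,W}(n,p):=\min\{n^{v_H-v_{H[W]}}p^{e_H}: H\subseteq F,\ e_H>0\}$, where $v_{H[W]}=|V(H)\cap W|$; and $\Phi_F:=\Phi_{F,\emptyset}=\min\{n^{v_H}p^{e_H}:H\subseteq F, e_H>0\}$. For a single vertex $w$ write $\Phi_{F,w}:=\Phi_{F,\{w\}}$. *)

(* Defs.v *)
From HB Require Import structures.
From mathcomp Require Import all_boot all_order all_algebra.
From mathcomp Require Import reals constructive_ereal exp.
Set Implicit Arguments. Unset Strict Implicit. Unset Printing Implicit Defensive.
Import Order.TTheory GRing.Theory Num.Theory.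
Local Open Scope ring_scope.

(* A (finite simple) graph inside an ambient finite type T:
   a vertex set and a set of edges, each edge a 2-element subset of the vertex set. *)
Definition graph (T : finType) := ({set T} * {set {set T}})%type.

Definition is_graph (T : finType) (G : graph T) : bool :=
  [forall e in G.2, (e \subset G.1) && (#|e| == 2)%N].

Definition subgraph (T : finType) (H G : graph T) : bool :=
  [&& is_graph H, H.1 \subset G.1 & H.2 \subset G.2].

Definition spans_no_edge (T : finType) (G : graph T) (W : {set T}) : bool :=
  [forall e in G.2, ~~ (e \subset W)].

(* Phi_{F,W}(n,p) = min { n^(v_H - v_{H[W]}) p^(e_H) : H subgraph of F, e_H > 0 },
   with the convention min(empty) = +oo. *)
Definition Phi (R : realType) (n : nat) (p : R) (T : finType) (F : graph T)
    (W : {set T}) : \bar R :=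
  \big[Order.min/+oo%E]_(H : graph T | subgraph H F && (0 < #|H.2|)%N)
     (((n%:R : R) ^+ (#|H.1| - #|H.1 :&: W|) * p ^+ #|H.2|)%:E).

Definition Kcomplete (k : nat) : graph 'I_k :=
  ([set: 'I_k], [set e : {set 'I_k} | #|e| == 2%N]).

Definition Kminus (k : nat) (u w : 'I_k) : graph 'I_k :=
  ([set: 'I_k], [set e : {set 'I_k} | #|e| == 2%N] :\ [set u; w]).

Definition gunion (T : finType) (G H : graph T) : graph T :=
  (G.1 :|: H.1, G.2 :|: H.2).

(* Main.v *)
Require Import Defs.
From HB Require Import structures.
From mathcomp Require Import all_boot all_order all_algebra.
From mathcomp Require Import reals constructive_ereal exp.
From mathcomp Require Import zify ring lra.
Import Order.TTheory GRing.Theory Num.Theory.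
Local Open Scope ring_scope.

Set Implicit Arguments. Unset Strict Implicit.
Section Aux.
Variable R : realType.

Definition val (n : nat) (p : R) (T : finType) (W : {set T}) (H : graph T) : R :=
  (n%:R : R) ^+ (#|H.1| - #|H.1 :&: W|) * p ^+ #|H.2|.

Lemma Phi_ge n p (T : finType) (F : graph T) (W : {set T}) (a : \bar R) :
  (forall H, subgraph H F -> (0 < #|H.2|)%N -> (a <= (val n p W H)%:E)%E) ->
  (a <= Phi n p F W)%E.
Proof.
move=> h; rewrite /Phi; apply: (big_ind (fun x => (a <= x)%E)) => [|x y hx hy|H /andP[h1 h2]].
- exact: leey.
- by rewrite le_min hx hy.
- exact: h.
Qed.

Lemma Phi_le n p (T : finType) (F : graph T) (W : {set T}) H :
  subgraph H F -> (0 < #|H.2|)%N -> (Phi n p F W <= (val n p W H)%:E)%E.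
Proof.
move=> h1 h2; rewrite /Phi (bigD1 H) /=; last by rewrite h1 h2.
by rewrite ge_min lexx.
Qed.

Lemma tconv (N : R) (k : nat) : 1 <= N -> (2 <= k)%N ->
  let t := N `^ (k%:R^-1) in
  1 <= t /\ N = t ^+ k /\ N `^ (- (2 / k%:R)) = (t ^+ 2)^-1 /\
      N `^ (1 - 2 / k%:R) = t ^+ (k - 2) /\
      N `^ (2 / k%:R) = t ^+ 2 /\ N `^ (1 / k%:R) = t.
Proof.
move=> N1 k2 t.
have N0 : 0 <= N by apply: le_trans N1.
have kn0 : (k%:R : R) != 0 by rewrite pnatr_eq0 -lt0n; apply: leq_trans k2.
have t0 : 0 <= t by apply: powR_ge0.
have e2 : N `^ (2 / k%:R) = t ^+ 2.
  by rewrite mulrC powRrM -(powR_mulrn _ t0).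
split; [|split; [|split; [|split; [|split]]]] => //.
- apply: le_trans (_ : N `^ 0 <= _); first by rewrite powRr0.
  by apply: ler_powR => //; rewrite invr_ge0.
- by rewrite -(powR_mulrn _ t0) /t -powRrM mulVf // powRr1.
- by rewrite powRN e2.
- have -> : 1 - 2 / k%:R = k%:R^-1 * (k - 2)%:R :> R.
    rewrite natrB // mulrBr mulVf //; congr (_ - _); by rewrite mulrC.
  by rewrite powRrM (powR_mulrn _ t0).
- by rewrite div1r.
Qed.

Lemma key (t C p : R) (a b e : nat) : 1 <= t -> 1 < C -> C * (t ^+ 2)^-1 <= p ->
  (0 < e)%N -> (b + 2 * e <= a)%N -> C * t ^+ b <= t ^+ a * p ^+ e.
Proof.
move=> t1 C1 hp e0 hab.
have t0 : 0 < t by apply: lt_le_trans t1.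
have t20 : 0 < t ^+ 2 by apply: exprn_gt0.
have Cpt : C <= p * t ^+ 2 by rewrite -ler_pdivrMr.
have C0 : 0 <= C by apply: ltW; apply: lt_trans C1.
have p0 : 0 <= p.
  apply: le_trans hp; apply: mulr_ge0 => //; by rewrite invr_ge0 ltW.
have -> : a = (b + 2 * e + (a - (b + 2 * e)))%N by rewrite subnKC.
rewrite exprD -mulrA [_ * p ^+ e]mulrC mulrA.
have -> : t ^+ (b + 2 * e) * p ^+ e = t ^+ b * (p * t ^+ 2) ^+ e.
  by rewrite exprD exprMn -exprM [(2 * e)%N]mulnC; ring.
have h1 : C * t ^+ b <= t ^+ b * (p * t ^+ 2) ^+ e.
  rewrite mulrC ler_pM2l ?exprn_gt0 //.
  apply: le_trans (_ : C ^+ e <= _).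
    by rewrite -{1}(expr1 C); apply: ler_weXn2l => //; apply: ltW.
  by apply: lerXn2r => //; rewrite nnegrE // mulr_ge0 // ltW.
apply: le_trans h1 _; rewrite -[X in X <= _]mulr1; apply: ler_wpM2l.
  by rewrite mulr_ge0 ?exprn_ge0 ?mulr_ge0 ?(ltW t0) ?(ltW t20).
exact: exprn_ege1.
Qed.

Lemma bin2_2 v : (2 * 'C(v, 2) = v * v.-1)%N.
Proof.
elim: v => [|v IH] //; rewrite binS bin1 mulnDr IH; case: v {IH} => //= v; nia.
Qed.

Lemma bin2_ge2 v : (0 < 'C(v, 2))%N -> (2 <= v)%N.
Proof. by case: v => [|[|v]]. Qed.

Lemma edges_bound (T : finType) (H : graph T) : is_graph H ->
  (#|H.2| <= 'C(#|H.1|, 2))%N.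
Proof.
move=> hH; rewrite -cards_draws; apply: subset_leq_card; apply/subsetP => e he.
by rewrite inE; have := forallP hH e; rewrite he.
Qed.

Lemma part1core (C : R) (k n : nat) (p : R) (T : finType) (F : graph T) :
  1 < C -> (2 <= k)%N -> (1 <= n)%N ->
  C * powR (n%:R) (- (2 / k%:R)) <= p -> (#|T| <= k)%N ->
  ((C * n%:R)%:E <= Phi n p F set0)%E.
Proof.
move=> C1 k2 n1 hp hT.
have N1 : 1 <= (n%:R : R) by rewrite ler1n.
have [t1 [eN [e1 _]]] := tconv N1 k2.
set t := _ `^ _ in t1 eN e1.
rewrite e1 in hp.
apply: Phi_ge => H hsub he; rewrite lee_fin /val setI0 cards0 subn0.
rewrite eN -exprM; apply: key => //.
have hH : is_graph H by case/and3P: hsub.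
have hb := edges_bound hH.
have hv : (#|H.1| <= k)%N by apply: leq_trans (max_card _) hT.
have h2 := bin2_2 #|H.1|.
have hv2 : (2 <= #|H.1|)%N by apply: bin2_ge2; apply: leq_trans hb.
nia.
Qed.

Lemma cardI1 (T : finType) (A : {set T}) x : #|A :&: [set x]| = (x \in A).
Proof.
case: (boolP (x \in A)) => hx.
  by rewrite (setIidPr _) ?sub1set // cards1.
have -> : A :&: [set x] = set0.
  by apply/setP => y; rewrite !inE; case: eqP => [->|]; rewrite ?andbF ?(negbTE hx).
by rewrite cards0.
Qed.

Lemma part2b (C : R) (k k' n : nat) (p : R) (u w : 'I_k') :
  1 < C -> (2 <= k)%N -> (1 <= n)%N ->
  C * powR (n%:R) (- (2 / k%:R)) <= p ->
  (3 <= k')%N -> (k' <= k)%N -> u != w ->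
  ((Order.min (C * powR (n%:R) (1 - 2 / k%:R)) (C * powR (n%:R) (2 / k%:R)))%:E
         <= Phi n p (Kminus u w) [set w])%E.
Proof.
move=> C1 k2 n1 hp k3 kk uw.
have N1 : 1 <= (n%:R : R) by rewrite ler1n.
have [t1 [eN [e1 [e3 [e4 _]]]]] := tconv N1 k2.
set t := _ `^ _ in t1 eN e1 e3 e4.
rewrite e1 in hp; rewrite e3 e4.
apply: Phi_ge => H hsub he; rewrite lee_fin /val cardI1.
have hH : is_graph H by case/and3P: hsub.
have hb := edges_bound hH.
have hv : (#|H.1| <= k')%N by apply: leq_trans (max_card _) _; rewrite card_ord.
have h2 := bin2_2 #|H.1|.
have hv2 : (2 <= #|H.1|)%N by apply: bin2_ge2; apply: leq_trans hb.
rewrite eN -exprM ge_min; apply/orP.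
case: (boolP (w \in H.1)) => hw; last first.
  left; rewrite subn0; apply: key => //; nia.
case: (boolP (u \in H.1)) => hu; last first.
  left; apply: key => //.
  have hv' : (#|H.1| <= k'.-1)%N.
    apply: leq_trans (_ : #|[set~ u]| <= _)%N; last by rewrite cardsC1 card_ord.
    apply: subset_leq_card; apply/subsetP => y hy.
    by rewrite !inE; apply: contraNneq hu => <-.
  nia.
right; apply: key => //.
have hb' : (#|H.2| < 'C(#|H.1|, 2))%N.
  rewrite -cards_draws.
  set D := [set A : {set 'I_k'} | A \subset H.1 & #|A| == 2].
  have huw : [set u; w] \in D.
    by rewrite inE cards2 uw /= subUset !sub1set hu hw.
  rewrite (cardsD1 [set u; w] D) huw add1n ltnS; apply: subset_leq_card.
  apply/subsetP => e he'; rewrite !inE; have := forallP hH e; rewrite he' /= => /andP[-> ->].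
  case/and3P: hsub => _ _ /subsetP /(_ e he'); rewrite !inE => /andP[-> _].
  by rewrite andbT.
nia.
Qed.

Lemma core (T : finType) (F3 F4 H : graph T) (W3 W4 : {set T}) :
  is_graph F3 -> is_graph F4 -> W3 \subset F3.1 -> W4 \subset F4.1 ->
  [disjoint W3 & F4.1] -> [disjoint W4 & F3.1] -> subgraph H (gunion F3 F4) ->
  let H3 := (H.1 :&: F3.1, H.2 :&: F3.2) in
  let H4 := (H.1 :&: F4.1, H.2 :&: F4.2) in
  let I := H.1 :&: (F3.1 :&: F4.1) in
  [/\ subgraph H3 F3, subgraph H4 F4, H.2 = H3.2 :|: H4.2,
     (#|H.1| - #|H.1 :&: (W3 :|: W4)| + #|I| =
        (#|H3.1| - #|H3.1 :&: W3|) + (#|H4.1| - #|H4.1 :&: W4|))%N &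
     (#|I| <= #|H3.1| - #|H3.1 :&: W3|)%N /\ (#|I| <= #|H4.1| - #|H4.1 :&: W4|)%N].
Proof.
move=> g3 g4 s3 s4 d3 d4 /and3P[hH s1 s2] H3 H4 I.
have sg : forall F : graph T, is_graph F -> subgraph (H.1 :&: F.1, H.2 :&: F.2) F.
  move=> F gF; rewrite /subgraph /= subsetIr subsetIr !andbT.
  apply/forallP => e; apply/implyP => /setIP [eH eF].
  have := forallP hH e; rewrite eH /= => /andP[e1 ->].
  have := forallP gF e; rewrite eF /= => /andP[e2 _].
  by rewrite subsetI e1 e2.
have E2 : H.2 = H3.2 :|: H4.2 by rewrite /= -setIUr (setIidPl s2).
have E1 : H.1 = H3.1 :|: H4.1 by rewrite /= -setIUr (setIidPl s1).
have I34 : H3.1 :&: H4.1 = I by rewrite /= setIACA setIid.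
have c1 := cardsUI H3.1 H4.1.
rewrite -E1 I34 in c1.
have EW : H.1 :&: (W3 :|: W4) = (H3.1 :&: W3) :|: (H4.1 :&: W4).
  by rewrite /= -!setIA (setIidPr s3) (setIidPr s4) setIUr.
have D34 : (H3.1 :&: W3) :&: (H4.1 :&: W4) = set0.
  apply/setP => y; rewrite !inE.
  case: (boolP (y \in W3)) => y3; last by rewrite !andbF.
  by rewrite (disjointFr d3 y3) !andbF.
have cW := cardsUI (H3.1 :&: W3) (H4.1 :&: W4).
rewrite -EW D34 cards0 addn0 in cW.
have DI3 : I :&: (H3.1 :&: W3) = set0.
  apply/setP => y; rewrite !inE.
  case: (boolP (y \in W3)) => y3; last by rewrite !andbF.
  by rewrite (disjointFr d3 y3) !andbF.
have DI4 : I :&: (H4.1 :&: W4) = set0.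
  apply/setP => y; rewrite !inE.
  case: (boolP (y \in W4)) => y4; last by rewrite !andbF.
  by rewrite (disjointFr d4 y4) !andbF.
have cI3 := cardsUI I (H3.1 :&: W3); rewrite DI3 cards0 addn0 in cI3.
have cI4 := cardsUI I (H4.1 :&: W4); rewrite DI4 cards0 addn0 in cI4.
have l3 : (#|I :|: (H3.1 :&: W3)| <= #|H3.1|)%N.
  by apply: subset_leq_card; rewrite subUset -I34 !subsetIl.
have l4 : (#|I :|: (H4.1 :&: W4)| <= #|H4.1|)%N.
  by apply: subset_leq_card; rewrite subUset -I34 subsetIr subsetIl.
have lW : (#|H.1 :&: (W3 :|: W4)| <= #|H.1|)%N by apply: subset_leq_card; apply: subsetIl.
split; [exact: sg | exact: sg | exact: E2 | lia | lia].
Qed.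

Lemma natA (m i m3 m4 : nat) : (m + i = m3 + m4)%N -> (i <= m3)%N -> (i <= m4)%N ->
  [/\ (m4 <= m)%N, (m3 <= m)%N & (m3 + m4 <= m + i)%N].
Proof. move=> *; split; lia. Qed.

Lemma mono_val (N p : R) (a b c d : nat) : 1 <= N -> 0 <= p <= 1 ->
  (a <= b)%N -> (d <= c)%N -> N ^+ a * p ^+ c <= N ^+ b * p ^+ d.
Proof.
move=> N1 /andP[p0 p1] ab dc.
have N0 : 0 <= N by apply: le_trans N1.
apply: ler_pM; rewrite ?exprn_ge0 //.
  exact: ler_weXn2l.
exact: ler_wiXn2l.
Qed.

Lemma val_ge0 n (p : R) (T : finType) (W : {set T}) H : 0 <= p -> 0 <= val n p W H.
Proof. by move=> p0; rewrite /val mulr_ge0 ?exprn_ge0. Qed.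

Lemma part3a (T : finType) (n : nat) (p : R) (F3 F4 : graph T) (W3 W4 : {set T}) (x : T) :
      (1 <= n)%N -> 0 <= p <= 1 ->
      is_graph F3 -> is_graph F4 ->
      W3 \subset F3.1 -> W4 \subset F4.1 ->
      (1 <= Phi n p F3 W3)%E -> (1 <= Phi n p F4 W4)%E ->
      F3.1 :&: F4.1 = [set x] -> x \notin W3 -> x \notin W4 ->
      (Order.min (Order.min (Phi n p F3 W3) (Phi n p F4 W4))
                 (Phi n p F3 W3 * Phi n p F4 W4 * (n%:R^-1)%:E)
         <= Phi n p (gunion F3 F4) (W3 :|: W4))%E.
Proof.
move=> n1 hp g3 g4 s3 s4 P3 P4 hx x3 x4.
have N1 : 1 <= (n%:R : R) by rewrite ler1n.
have N0 : 0 < (n%:R : R) by apply: lt_le_trans N1.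
have p0 : 0 <= p by case/andP: hp.
have d3 : [disjoint W3 & F4.1].
  rewrite -setI_eq0; apply/eqP/setP => y; rewrite !inE.
  case: (boolP (y \in W3)) => y3 //=; apply/negP => y4.
  have : y \in F3.1 :&: F4.1 by rewrite inE y4 (subsetP s3 _ y3).
  by rewrite hx inE => /eqP e; move: x3; rewrite -e y3.
have d4 : [disjoint W4 & F3.1].
  rewrite -setI_eq0; apply/eqP/setP => y; rewrite !inE.
  case: (boolP (y \in W4)) => y4 //=; apply/negP => y3.
  have : y \in F3.1 :&: F4.1 by rewrite inE y3 (subsetP s4 _ y4).
  by rewrite hx inE => /eqP e; move: x4; rewrite -e y4.
apply: Phi_ge => H hsub he.
have [sg3 sg4 E2 Em [Il3 Il4]] := core g3 g4 s3 s4 d3 d4 hsub.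
set H3 := (_, _) in sg3 E2 Em Il3.
set H4 := (_, _) in sg4 E2 Em Il4.
have I1 : (#|H.1 :&: (F3.1 :&: F4.1)| <= 1)%N.
  by rewrite hx cardI1; case: (_ \in _).
have ce : (#|H.2| <= #|H3.2| + #|H4.2|)%N by rewrite E2 cardsU leq_subr.
have [hm4 hm3 hm34] := natA Em Il3 Il4.
have P30 : (0 <= Phi n p F3 W3)%E by apply: le_trans P3.
have P40 : (0 <= Phi n p F4 W4)%E by apply: le_trans P4.
rewrite /val.
case: (posnP #|H3.2|) => e3; case: (posnP #|H4.2|) => e4.
- move: he; rewrite E2 (cards0_eq e3) (cards0_eq e4) setU0 cards0 ltnn. done.
- rewrite ge_min ge_min; apply/orP; left; apply/orP; right.
  apply: le_trans (Phi_le _ _ _ sg4 e4) _; rewrite lee_fin /val.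
  by apply: mono_val => //; rewrite e3 in ce.
- rewrite ge_min ge_min; apply/orP; left; apply/orP; left.
  apply: le_trans (Phi_le _ _ _ sg3 e3) _; rewrite lee_fin /val.
  by apply: mono_val => //; rewrite e4 addn0 in ce.
- rewrite ge_min; apply/orP; right.
  apply: le_trans (_ : ((val n p W3 H3) * (val n p W4 H4) * n%:R^-1)%:E <= _)%E.
    rewrite !EFinM; apply: lee_wpmul2r; first by rewrite lee_fin invr_ge0 ltW.
    apply: lee_pmul. exact P30. exact P40. exact: (Phi_le n p W3 sg3 e3). exact: (Phi_le n p W4 sg4 e4).
  rewrite lee_fin /val ler_pdivrMr // [X in _ <= X]mulrAC -exprSr [X in X <= _]mulrACA -!exprD.
  apply: mono_val => //.
  by apply: leq_trans hm34 _; rewrite -addn1 leq_add2l.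
Qed.

Lemma part3b (T : finType) (n : nat) (p : R) (F3 F4 : graph T) (W3 W4 : {set T}) :
      (1 <= n)%N -> 0 <= p <= 1 ->
      is_graph F3 -> is_graph F4 ->
      W3 \subset F3.1 -> W4 \subset F4.1 ->
      (1 <= Phi n p F3 W3)%E -> (1 <= Phi n p F4 W4)%E ->
      F3.1 :&: F4.1 = set0 ->
      Phi n p (gunion F3 F4) (W3 :|: W4)
        = Order.min (Phi n p F3 W3) (Phi n p F4 W4).
Proof.
move=> n1 hp g3 g4 s3 s4 P3 P4 hx.
have N1 : 1 <= (n%:R : R) by rewrite ler1n.
have N0 : 0 < (n%:R : R) by apply: lt_le_trans N1.
have p0 : 0 <= p by case/andP: hp.
have d3 : [disjoint W3 & F4.1].
  rewrite -setI_eq0; apply/eqP/setP => y; rewrite !inE.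
  case: (boolP (y \in W3)) => y3 //=; apply/negP => y4.
  have : y \in F3.1 :&: F4.1 by rewrite inE y4 (subsetP s3 _ y3).
  by rewrite hx inE.
have d4 : [disjoint W4 & F3.1].
  rewrite -setI_eq0; apply/eqP/setP => y; rewrite !inE.
  case: (boolP (y \in W4)) => y4 //=; apply/negP => y3.
  have : y \in F3.1 :&: F4.1 by rewrite inE y3 (subsetP s4 _ y4).
  by rewrite hx inE.
apply/le_anti/andP; split; last first.
  apply: Phi_ge => H hsub he.
  have [sg3 sg4 E2 Em [Il3 Il4]] := core g3 g4 s3 s4 d3 d4 hsub.
  set H3 := (_, _) in sg3 E2 Em Il3.
  set H4 := (_, _) in sg4 E2 Em Il4.
  rewrite hx setI0 cards0 addn0 in Em.
  have ce : (#|H.2| <= #|H3.2| + #|H4.2|)%N by rewrite E2 cardsU leq_subr.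
  have P30 : (0 <= Phi n p F3 W3)%E by apply: le_trans P3.
  case: (posnP #|H3.2|) => e3; case: (posnP #|H4.2|) => e4.
  - move: he; rewrite E2 (cards0_eq e3) (cards0_eq e4) setU0 cards0 ltnn. done.
  - rewrite ge_min; apply/orP; right.
    apply: le_trans (Phi_le n p W4 sg4 e4) _; rewrite lee_fin /val.
    apply: mono_val => //; first by rewrite Em leq_addl.
    by rewrite e3 in ce.
  - rewrite ge_min; apply/orP; left.
    apply: le_trans (Phi_le n p W3 sg3 e3) _; rewrite lee_fin /val.
    apply: mono_val => //; first by rewrite Em leq_addr.
    by rewrite e4 addn0 in ce.
  - rewrite ge_min; apply/orP; left.
    apply: le_trans (Phi_le n p W3 sg3 e3) _.
    have v4 : (1 <= (val n p W4 H4)%:E)%E := le_trans P4 (Phi_le n p W4 sg4 e4).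
    rewrite lee_fin in v4; rewrite lee_fin.
    apply: le_trans (_ : val n p W3 H3 * val n p W4 H4 <= _).
      by apply: ler_peMr => //; apply: val_ge0.
    rewrite /val mulrACA -!exprD.
    by apply: mono_val => //; rewrite Em.
rewrite le_min; apply/andP; split.
  apply: Phi_ge => H /and3P[hH s1 s2] he.
  have hs : subgraph H (gunion F3 F4).
    by rewrite /subgraph hH /= (subset_trans s1 (subsetUl _ _)) (subset_trans s2 (subsetUl _ _)).
  apply: le_trans (Phi_le n p (W3 :|: W4) hs he) _.
  rewrite /val setIUr.
  have -> : H.1 :&: W4 = set0.
    apply/setP => y; rewrite !inE; case: (boolP (y \in W4)) => y4; last by rewrite andbF.
    rewrite andbT; apply/negP => hy; have := subsetP s1 y hy; by rewrite (disjointFr d4 y4).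
  by rewrite setU0.
apply: Phi_ge => H /and3P[hH s1 s2] he.
have hs : subgraph H (gunion F3 F4).
  by rewrite /subgraph hH /= (subset_trans s1 (subsetUr _ _)) (subset_trans s2 (subsetUr _ _)).
apply: le_trans (Phi_le n p (W3 :|: W4) hs he) _.
rewrite /val setIUr.
have -> : H.1 :&: W3 = set0.
  apply/setP => y; rewrite !inE; case: (boolP (y \in W3)) => y3; last by rewrite andbF.
  rewrite andbT; apply/negP => hy; have := subsetP s1 y hy; by rewrite (disjointFr d3 y3).
by rewrite set0U.
Qed.
End Aux.

Unset Implicit Arguments.
Set Strict Implicit.

Theorem lemma2p7 (R : realType) :
  (* part 1 *)
  (forall (C : R) (k k' n : nat) (p : R),
      1 < C -> (2 <= k)%N -> (1 <= n)%N -> 0 <= p <= 1 ->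
      C * powR (n%:R) (- (2 / k%:R)) <= p ->
      (k' <= k)%N ->
      ((C * n%:R)%:E <= Phi n p (Kcomplete k') set0)%E)
  /\
  (* part 2 *)
  (forall (C : R) (k k' n : nat) (p : R) (u w : 'I_k'),
      1 < C -> (2 <= k)%N -> (1 <= n)%N -> 0 <= p <= 1 ->
      C * powR (n%:R) (- (2 / k%:R)) <= p ->
      (3 <= k')%N -> (k' <= k)%N -> u != w ->
      ((C * n%:R)%:E <= Phi n p (Kminus u w) set0)%E /\
      ((Order.min (C * powR (n%:R) (1 - 2 / k%:R)) (C * powR (n%:R) (2 / k%:R)))%:E
         <= Phi n p (Kminus u w) [set w])%E /\
      C * powR (n%:R) (1 / k%:R)
         <= Order.min (C * powR (n%:R) (1 - 2 / k%:R)) (C * powR (n%:R) (2 / k%:R)))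
  /\
  (* part 3, F5: union meeting in exactly one vertex x *)
  (forall (T : finType) (n : nat) (p : R) (F3 F4 : graph T) (W3 W4 : {set T}) (x : T),
      (1 <= n)%N -> 0 <= p <= 1 ->
      is_graph F3 -> is_graph F4 ->
      W3 \subset F3.1 -> W4 \subset F4.1 ->
      spans_no_edge F3 W3 -> spans_no_edge F4 W4 ->
      (1 <= Phi n p F3 W3)%E -> (1 <= Phi n p F4 W4)%E ->
      F3.1 :&: F4.1 = [set x] -> x \notin W3 -> x \notin W4 ->
      (Order.min (Order.min (Phi n p F3 W3) (Phi n p F4 W4))
                 (Phi n p F3 W3 * Phi n p F4 W4 * (n%:R^-1)%:E)
         <= Phi n p (gunion F3 F4) (W3 :|: W4))%E)
  /\
  (* part 3, F6: disjoint union *)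
  (forall (T : finType) (n : nat) (p : R) (F3 F4 : graph T) (W3 W4 : {set T}),
      (1 <= n)%N -> 0 <= p <= 1 ->
      is_graph F3 -> is_graph F4 ->
      W3 \subset F3.1 -> W4 \subset F4.1 ->
      spans_no_edge F3 W3 -> spans_no_edge F4 W4 ->
      (1 <= Phi n p F3 W3)%E -> (1 <= Phi n p F4 W4)%E ->
      F3.1 :&: F4.1 = set0 ->
      Phi n p (gunion F3 F4) (W3 :|: W4)
        = Order.min (Phi n p F3 W3) (Phi n p F4 W4)).
Proof.
split; [|split; [|split]].
- move=> C k k' n p C1 k2 n1 hp hC kk.
  by apply: part1core hC _ => //; rewrite card_ord.
- move=> C k k' n p u w C1 k2 n1 hp hC k3 kk uw.
  split; first by apply: part1core hC _ => //; rewrite card_ord.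
  split; first exact: (part2b C1 k2 n1 hC k3 kk uw).
  have N1 : 1 <= (n%:R : R) by rewrite ler1n.
  have [t1 [_ [_ [e3 [e4 e5]]]]] := tconv N1 k2.
  rewrite e3 e4 e5.
  have C0 : 0 < C by apply: lt_trans C1.
  rewrite le_min !ler_pM2l //; apply/andP; split.
    rewrite -{1}(expr1 (_ `^ _)); apply: ler_weXn2l => //.
    by rewrite leq_subRL ?addn1 //; apply: leq_trans kk.
  rewrite -{1}(expr1 (_ `^ _)); exact: ler_weXn2l.
- move=> T n p F3 F4 W3 W4 x n1 hp g3 g4 s3 s4 _ _ P3 P4 hx x3 x4.
  exact: (part3a n1 hp g3 g4 s3 s4 P3 P4 hx x3 x4).
- move=> T n p F3 F4 W3 W4 n1 hp g3 g4 s3 s4 _ _ P3 P4 hx.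
  exact: (part3b n1 hp g3 g4 s3 s4 P3 P4 hx).
Qed.
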